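(* Let $G=\bigl((f_j)_{j=1}^n;(\mu^{R})_{\emptyset\ne R\subseteq[n]}\bigr)$ be an $n$-resource selection game. (a) For every nonempty $R\subseteq[n]$, every two Nash equilibria $s,s'$ of $G$, every $k$ with $s_k(R)>0$ and every $k'$ with $s'_{k'}(R)>0$, we have $h^s_k=h^{s'}_{k'}$. (b) If there is no real number $h$ that is a plateau height of two distinct functions $f_j,f_{j'}$ ($j\ne j'$), then $\mu^s_j=\mu^{s'}_j$ for every $j\in[n]$ and every two Nash equilibria $s,s'$ of $G$.
   Context: Write $[n]=\{1,\ldots,n\}$ and $\mathbb{R}_{\ge}=[0,\infty)$. An $n$-resource selection game is a pair $G=\bigl((f_j)_{j=1}^n;(\mu^{R})_{\emptyset\ne R\subseteq[n]}\bigr)$ where each $f_j:\mathbb{R}_{\ge}\to\mathbb{R}$ is nondecreasing and $\mu^R\in\mathbb{R}_{\ge}$ for every nonempty $R\subseteq[n]$. A consumption profile is a map $s$ assigning to each nonempty $R\subseteq[n]$ a vector $s(R)\in\mathbb{R}_{\ge}^{[n]}$ with $s_j(R)=0$ for $j\notin R$ and $\sum_{j}s_j(R)=\mu^R$. The load of resource $j$ is $\mu^s_j=\sum_{R}s_j(R)$ and its cost is $h^s_j=f_j(\mu^s_j)$. $s$ is a Nash equilibrium if for every nonempty $R$, every $k$ with $s_k(R)>0$ and every $j\in R$, $h^s_k\le h^s_j$. A real number $h$ is a plateau height of a nondecreasing $f$ if there exist $x\ne y$ with $f(x)=f(y)=h$. *)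

(* Defs.v *)
(* Real numbers are modelled by an arbitrary real field R
   (the statement is purely order-algebraic). Resources [n] = 'I_n,
   nonempty subsets R of [n] = {set 'I_n} with R != set0. *)
From HB Require Import structures.
From mathcomp Require Import all_boot all_order all_algebra.
Set Implicit Arguments. Unset Strict Implicit. Unset Printing Implicit Defensive.
Import Order.TTheory GRing.Theory Num.Theory.
Local Open Scope ring_scope.

(* f : R_{>=0} -> R nondecreasing, represented as a total function R -> R
   whose values are only constrained on [0, oo). *)
Definition nondecr_nonneg (R : realFieldType) (g : R -> R) : Prop :=
  forall x y : R, 0 <= x -> x <= y -> g x <= g y.

Definition is_game (R : realFieldType) (n : nat)
  (f : 'I_n -> R -> R) (mu : {set 'I_n} -> R) : Prop :=
  (forall j, nondecr_nonneg (f j)) /\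
  (forall S : {set 'I_n}, S != set0 -> 0 <= mu S).

(* consumption profile: s S j = s_j(S); values at S = set0 are irrelevant *)
Definition is_profile (R : realFieldType) (n : nat)
  (mu : {set 'I_n} -> R) (s : {set 'I_n} -> 'I_n -> R) : Prop :=
  forall S : {set 'I_n}, S != set0 ->
    (forall j, 0 <= s S j) /\
    (forall j, j \notin S -> s S j = 0) /\
    \sum_(j < n) s S j = mu S.

Definition load (R : realFieldType) (n : nat)
  (s : {set 'I_n} -> 'I_n -> R) (j : 'I_n) : R :=
  \sum_(S : {set 'I_n} | S != set0) s S j.

Definition cost (R : realFieldType) (n : nat) (f : 'I_n -> R -> R)
  (s : {set 'I_n} -> 'I_n -> R) (j : 'I_n) : R :=
  f j (load s j).

Definition is_nash (R : realFieldType) (n : nat) (f : 'I_n -> R -> R)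
  (mu : {set 'I_n} -> R) (s : {set 'I_n} -> 'I_n -> R) : Prop :=
  is_profile mu s /\
  forall S : {set 'I_n}, S != set0 ->
    forall k j : 'I_n, 0 < s S k -> j \in S -> cost f s k <= cost f s j.

Definition plateau_height (R : realFieldType) (g : R -> R) (h : R) : Prop :=
  exists x y : R, 0 <= x /\ 0 <= y /\ x != y /\ g x = h /\ g y = h.

(* Main.v *)
Require Import Defs.
From HB Require Import structures.
From mathcomp Require Import all_boot all_order all_algebra.
Import Order.TTheory GRing.Theory Num.Theory.
Local Open Scope ring_scope.
Set Implicit Arguments. Unset Strict Implicit.

Lemma pos_in (R : realFieldType) (n : nat) (mu : {set 'I_n} -> R) s S j :
  is_profile mu s -> S != set0 -> 0 < s S j -> j \in S.
Proof.
move=> Hp HS Hj; apply/negPn/negP => Hn.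
by have [_ [Hz _]] := Hp S HS; rewrite Hz ?ltxx in Hj.
Qed.

Lemma load_ge0 (R : realFieldType) (n : nat) (mu : {set 'I_n} -> R) s j :
  is_profile mu s -> 0 <= load s j.
Proof.
move=> Hp; apply: sumr_ge0 => S HS; by have [H _] := Hp S HS.
Qed.

Lemma sum_all (R : realFieldType) (n : nat) (mu : {set 'I_n} -> R) s S (P : pred 'I_n) :
  is_profile mu s -> S != set0 -> (forall j, 0 < s S j -> P j) ->
  \sum_(j | P j) s S j = mu S.
Proof.
move=> Hp HS H; have [H0 [_ Hs]] := Hp S HS.
rewrite -Hs (bigID P predT) /= [X in _ + X]big1 ?addr0 //.
move=> j /negP Hj; have := H0 j; rewrite le0r => /orP[/eqP//|Hl].
by case: Hj; apply: H.
Qed.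

Lemma sum_none (R : realFieldType) (n : nat) (mu : {set 'I_n} -> R) s S (P : pred 'I_n) :
  is_profile mu s -> S != set0 -> (forall j, P j -> ~~ (0 < s S j)) ->
  \sum_(j | P j) s S j = 0.
Proof.
move=> Hp HS H; have [H0 _] := Hp S HS.
apply: big1 => j Pj; have := H0 j; rewrite le0r => /orP[/eqP//|Hl].
by have := H j Pj; rewrite Hl.
Qed.

Lemma sum_le (R : realFieldType) (n : nat) (mu : {set 'I_n} -> R) s S (P : pred 'I_n) :
  is_profile mu s -> S != set0 -> \sum_(j | P j) s S j <= mu S.
Proof.
move=> Hp HS; have [H0 [_ Hs]] := Hp S HS.
rewrite -Hs (bigID P predT) /= lerDl; apply: sumr_ge0 => j _; exact: H0.
Qed.

Lemma cost_le (R : realFieldType) (n : nat) (f : 'I_n -> R -> R) (mu : {set 'I_n} -> R) s s' :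
  is_game f mu -> is_nash f mu s -> is_nash f mu s' -> forall j, cost f s' j <= cost f s j.
Proof.
move=> [Hf _] [Hp Hn] [Hp' Hn'].
pose T := [pred j | cost f s j < cost f s' j].
have [j0 Tj0|none] := pickP T; last first.
  by move=> j; have := none j; rewrite /T /= => /negbT; rewrite -leNgt.
exfalso.
have HT : forall j, T j -> load s j < load s' j.
  move=> j; rewrite /T /= ltNge; apply: contraNT; rewrite -leNgt => Hl.
  apply: Hf => //; exact: load_ge0 Hp'.
have Hlt : \sum_(j | T j) load s j < \sum_(j | T j) load s' j.
  apply: ltr_sum => //; apply/hasP; exists j0 => //; exact: mem_index_enum.
move: Hlt; apply/negP; rewrite -leNgt /load.
rewrite exchange_big [X in _ <= X]exchange_big /=.
apply: ler_sum => S HS.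
have [k /andP[kT kpos]|nk] := pickP (fun k => T k && (0 < s' S k)).
  rewrite (@sum_all _ _ _ _ _ T Hp HS); first exact: sum_le Hp' HS.
  move=> j Hj; rewrite /T /=.
  have jS := pos_in Hp HS Hj; have kS := pos_in Hp' HS kpos.
  apply: (le_lt_trans (Hn S HS j k Hj kS)).
  apply: (lt_le_trans kT); exact: (Hn' S HS k j kpos jS).
rewrite (@sum_none _ _ _ _ _ T Hp' HS); first by apply: sumr_ge0 => j _; have [H _] := Hp S HS.
by move=> j Tj; have := nk j; rewrite Tj /= => ->.
Qed.

Lemma cost_eq (R : realFieldType) (n : nat) (f : 'I_n -> R -> R) (mu : {set 'I_n} -> R) s s' :
  is_game f mu -> is_nash f mu s -> is_nash f mu s' -> forall j, cost f s j = cost f s' j.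
Proof.
move=> G N N' j; apply/eqP; rewrite eq_le; apply/andP; split; [exact: (cost_le G N' N) | exact: (cost_le G N N')].
Qed.

Lemma level_S (R : realFieldType) (n : nat) (f : 'I_n -> R -> R) (mu : {set 'I_n} -> R) s s'
  (P : pred 'I_n) c S k :
  is_game f mu -> is_nash f mu s -> is_nash f mu s' ->
  (forall j, P j = (cost f s j == c)) -> S != set0 -> P k -> 0 < s S k ->
  \sum_(j | P j) s S j = mu S /\ \sum_(j | P j) s' S j = mu S.
Proof.
move=> G N N' HP HS Pk kpos.
have Heq := cost_eq G N N'.
case: N => Hp Hn; case: N' => Hp' Hn'.
have kS := pos_in Hp HS kpos.
move: Pk; rewrite HP => /eqP Hk.
split.
  apply: (sum_all Hp HS) => j Hj; have jS := pos_in Hp HS Hj.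
  rewrite HP; apply/eqP; rewrite -Hk; apply/le_anti/andP; split.
    exact: Hn S HS j k Hj kS.
  exact: Hn S HS k j kpos jS.
apply: (sum_all Hp' HS) => j Hj; have jS := pos_in Hp' HS Hj.
rewrite HP; apply/eqP; rewrite -Hk; apply/le_anti/andP; split.
  by rewrite Heq Heq; exact: Hn' S HS j k Hj kS.
exact: Hn S HS k j kpos jS.
Qed.

Lemma level_sum (R : realFieldType) (n : nat) (f : 'I_n -> R -> R) (mu : {set 'I_n} -> R) s s' c :
  is_game f mu -> is_nash f mu s -> is_nash f mu s' ->
  \sum_(j | cost f s j == c) load s j = \sum_(j | cost f s j == c) load s' j.
Proof.
move=> G N N'.
have Heq := cost_eq G N N'.
rewrite /load exchange_big [RHS]exchange_big /=.
apply: eq_bigr => S HS.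
have [k /andP[Pk kpos]|nk] := pickP (fun k => (cost f s k == c) && (0 < s S k)).
  by have [-> ->] := @level_S _ _ _ _ _ _ (fun j => cost f s j == c) _ _ _ G N N' (fun j => erefl) HS Pk kpos.
have [k /andP[Pk kpos]|nk'] := pickP (fun k => (cost f s k == c) && (0 < s' S k)).
  have HP : forall j, (cost f s j == c) = (cost f s' j == c) by move=> j; rewrite Heq.
  by have [-> ->] := @level_S _ _ _ _ _ _ (fun j => cost f s j == c) _ _ _ G N' N HP HS Pk kpos.
case: N => Hp _; case: N' => Hp' _.
rewrite (@sum_none _ _ _ _ _ _ Hp HS); last by move=> j Tj; have := nk j; rewrite Tj /= => ->.
rewrite (@sum_none _ _ _ _ _ _ Hp' HS) //; by move=> j Tj; have := nk' j; rewrite Tj /= => ->.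
Qed.

Lemma plat_lemma (R : realFieldType) (n : nat) (f : 'I_n -> R -> R) (mu : {set 'I_n} -> R) s s' j :
  is_game f mu -> is_nash f mu s -> is_nash f mu s' -> load s j < load s' j ->
  exists j', j' != j /\ plateau_height (f j) (cost f s j) /\ plateau_height (f j') (cost f s j).
Proof.
move=> G N N' Hlt.
have Heq := cost_eq G N N'.
have Hp := N.1; have Hp' := N'.1.
set c := cost f s j.
have [j' /andP[/andP[Pj' nj'] lj']|none] :=
  pickP (fun j' => (cost f s j' == c) && (j' != j) && (load s' j' < load s j')).
  exists j'; split => //; split.
    exists (load s j), (load s' j); do ! split; try exact: load_ge0 Hp; try exact: load_ge0 Hp'.
    - by rewrite lt_eqF.
    - by rewrite /c Heq.
  exists (load s j'), (load s' j'); do ! split; try exact: load_ge0 Hp; try exact: load_ge0 Hp'.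
    - by rewrite gt_eqF.
    - exact/eqP.
    - by rewrite -[f j' _]/(cost f s' j') -Heq; apply/eqP.
exfalso.
have := level_sum c G N N'; apply/eqP; rewrite lt_eqF //.
rewrite (bigD1 j) /=; last by rewrite /c.
rewrite [X in _ < X](bigD1 j) /=; last by rewrite /c.
apply: ltr_leD => //; apply: ler_sum => i /andP[Pi ni].
by have := none i; rewrite Pi ni /= => /negbT; rewrite -leNgt.
Qed.

Unset Implicit Arguments.

Theorem mainTheorem3 (R : realFieldType) (n : nat)
  (f : 'I_n -> R -> R) (mu : {set 'I_n} -> R) :
  is_game f mu ->
  (forall (S : {set 'I_n}) (s s' : {set 'I_n} -> 'I_n -> R) (k k' : 'I_n),
     S != set0 -> is_nash f mu s -> is_nash f mu s' ->
     0 < s S k -> 0 < s' S k' -> cost f s k = cost f s' k') /\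
  ((~ exists (h : R) (j j' : 'I_n),
        j != j' /\ plateau_height (f j) h /\ plateau_height (f j') h) ->
   forall (s s' : {set 'I_n} -> 'I_n -> R),
     is_nash f mu s -> is_nash f mu s' -> forall j : 'I_n, load s j = load s' j).
Proof.
move=> G; split.
  move=> S s s' k k' HS N N' kpos kpos'.
  have Heq := cost_eq G N N'.
  have kS := pos_in N.1 HS kpos; have kS' := pos_in N'.1 HS kpos'.
  apply/le_anti/andP; split.
    rewrite -Heq; exact: N.2 S HS k k' kpos kS'.
  rewrite Heq; exact: N'.2 S HS k' k kpos' kS.
move=> Hno s s' N N' j.
case: (ltgtP (load s j) (load s' j)) => // H; exfalso; apply: Hno.
  have [j' [nj [P1 P2]]] := plat_lemma G N N' H.
  by exists (cost f s j), j, j'; rewrite eq_sym.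
have [j' [nj [P1 P2]]] := plat_lemma G N' N H.
by exists (cost f s' j), j, j'; rewrite eq_sym.
Qed.
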